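(* Let $v$ be a $P$-vertex of the SP tree $T$ with children $x,y$. Then for all $\tilde{\boldsymbol s}_v\in\mathbb Z^{\Lambda}$ and $\tilde{\boldsymbol c}_v\in\mathbb Z_{\ge0}^{\Lambda}$, $$d_v(\tilde{\boldsymbol s}_v,\tilde{\boldsymbol c}_v)=\min\{d_x(\tilde{\boldsymbol s}_x,\tilde{\boldsymbol c}_x)+d_y(\tilde{\boldsymbol s}_y,\tilde{\boldsymbol c}_y)\ :\ \tilde{\boldsymbol s}_x+\tilde{\boldsymbol s}_y=\tilde{\boldsymbol s}_v,\ \tilde{\boldsymbol c}_x+\tilde{\boldsymbol c}_y=\tilde{\boldsymbol c}_v,\ \tilde{\boldsymbol s}_x,\tilde{\boldsymbol s}_y\in\mathbb Z_{\ge0}^{\Lambda},\ \tilde{\boldsymbol c}_x,\tilde{\boldsymbol c}_y\in\mathbb Z_{\ge0}^{\Lambda}\},$$ with the conventions $\infty+z=\infty$ and $\min\emptyset=\infty$.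
   Context: A RobMCF instance $(G,u,c,\boldsymbol b)$ consists of a finite directed graph (parallel arcs allowed) $G=(V,A)$ with $A=A^{\mathrm{fix}}\cup A^{\mathrm{free}}$ (disjoint; fixed and free arcs), capacities $u:A\to\mathbb Z_{\ge0}$, costs $c:A\to\mathbb Z_{\ge0}$, a finite nonempty scenario set $\Lambda$ and balances $b^\lambda:V\to\mathbb Z$, $\lambda\in\Lambda$, with $\sum_v b^\lambda(v)=0$. Series-parallel (SP) digraphs are defined recursively: a single arc $(o,q)$ is an SP digraph with origin $o$ and target $q$; if $G_1$ (origin $o_1$, target $q_1$) and $G_2$ (origin $o_2$, target $q_2$) are SP digraphs, then their series composition (identify $q_1$ with $o_2$; origin $o_1$, target $q_2$) and their parallel composition (identify $o_1$ with $o_2$ to form the origin and $q_1$ with $q_2$ to form the target) are SP digraphs. Here $G$ is an SP digraph. An SP tree $T$ of $G$ is a rooted binary tree whose leaves ($L$-vertices) correspond bijectively to the arcs of $G$ and whose inner vertices are $S$-vertices (ordered children) or $P$-vertices; each tree vertex $v$ is associated with the SP subgraph $G_v$ (origin $o_v$, target $q_v$): a leaf with its single arc, an $S$-vertex with the series composition of its children's subgraphs (first child first), a $P$-vertex with their parallel composition; the root $r$ has $G_r=G$. For a tree vertex $v$, $\tilde{\boldsymbol s}_v=(\tilde s^\lambda_v)_{\lambda\in\Lambda}\in\mathbb Z^{\Lambda}$ and $\tilde{\boldsymbol c}_v=(\tilde c^\lambda_v)_{\lambda\in\Lambda}\in\mathbb Z_{\ge0}^{\Lambda}$, the demand label $d_v(\tilde{\boldsymbol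 s}_v,\tilde{\boldsymbol c}_v)\in\{0,\infty\}$ equals $0$ if there exist functions $f^\lambda:A(G_v)\to\mathbb Z_{\ge0}$, $\lambda\in\Lambda$, with (i) $\sum_{a\in A(G_v)}c(a)f^\lambda(a)=\tilde c^\lambda_v$ for all $\lambda$; (ii) for all $w\in V(G_v)\setminus\{q_v\}$ and $\lambda$: $\sum_{a=(w,z)\in A(G_v)}f^\lambda(a)-\sum_{a=(z,w)\in A(G_v)}f^\lambda(a)$ equals $b^\lambda(w)$ if $w\ne o_v$ and equals $\tilde s^\lambda_v$ if $w=o_v$; (iii) $f^\lambda(a)=f^{\lambda'}(a)$ for all $a\in A^{\mathrm{fix}}\cap A(G_v)$ and $\lambda,\lambda'$; (iv) $f^\lambda(a)\le u(a)$ for all $a\in A(G_v)$, $\lambda$; and $d_v(\tilde{\boldsymbol s}_v,\tilde{\boldsymbol c}_v)=\infty$ otherwise. *)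

(* Defs.v *)
From mathcomp Require Import all_boot all_order all_algebra.
From Stdlib Require Import ClassicalDescription.
Set Implicit Arguments. Unset Strict Implicit. Unset Printing Implicit Defensive.
Import GRing.Theory Num.Theory.

(* Values of demand labels: {0, oo}. *)
Inductive lab := L0 | Linf.

Definition ladd (x y : lab) : lab :=
  match x, y with L0, L0 => L0 | _, _ => Linf end.

Definition lab_min (S : lab -> Prop) : lab :=
  if excluded_middle_informative (S L0) then L0 else Linf.

(* SP trees: leaves are arcs, inner vertices are S-vertices (ordered children)
   or P-vertices. *)
Inductive sptree (A : Type) :=
| Leaf of A
| Snode of sptree A & sptree A
| Pnode of sptree A & sptree A.
Arguments Leaf {A}. Arguments Snode {A}. Arguments Pnode {A}.

Fixpoint subtree (A : Type) (t r : sptree A) : Prop :=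
  t = r \/ match r with
           | Leaf _ => False
           | Snode r1 r2 | Pnode r1 r2 => subtree t r1 \/ subtree t r2
           end.

Section SP.
Variables (V A : finType) (tail head : A -> V).

Fixpoint orig (t : sptree A) : V :=
  match t with Leaf a => tail a | Snode t1 _ => orig t1 | Pnode t1 _ => orig t1 end.
Fixpoint targ (t : sptree A) : V :=
  match t with Leaf a => head a | Snode _ t2 => targ t2 | Pnode t1 _ => targ t1 end.

Fixpoint arcs (t : sptree A) : {set A} :=
  match t with
  | Leaf a => [set a]
  | Snode t1 t2 | Pnode t1 t2 => arcs t1 :|: arcs t2
  end.

Definition verts (t : sptree A) : {set V} :=
  [set tail a | a in arcs t] :|: [set head a | a in arcs t].

Fixpoint sp_wf (t : sptree A) : Prop :=
  match t with
  | Leaf a => tail a <> head a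
  | Snode t1 t2 =>
      [/\ sp_wf t1, sp_wf t2, targ t1 = orig t2,
          [disjoint arcs t1 & arcs t2] &
          verts t1 :&: verts t2 = [set targ t1]]
  | Pnode t1 t2 =>
      [/\ sp_wf t1, sp_wf t2, orig t1 = orig t2 /\ targ t1 = targ t2,
          [disjoint arcs t1 & arcs t2] &
          verts t1 :&: verts t2 = [set orig t1; targ t1]]
  end.

Definition sp_tree_of (r : sptree A) : Prop :=
  [/\ sp_wf r, arcs r = [set: A] & verts r = [set: V]].

Variables (L : finType) (fixed : {set A}) (u c : A -> nat) (b : L -> V -> int).

Definition feasible (t : sptree A) (s : L -> int) (cv : L -> nat) : Prop :=
  exists f : L -> A -> nat,
    [/\ (forall l, \sum_(a in arcs t) c a * f l a = cv l)%N,
        (forall w l, w \in verts t -> w != targ t ->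
           (\sum_(a in arcs t | tail a == w) (f l a)%:Z
            - \sum_(a in arcs t | head a == w) (f l a)%:Z)%R
           = (if w == orig t then s l else b l w)),
        (forall a l l', a \in arcs t -> a \in fixed -> f l a = f l' a) &
        (forall a l, a \in arcs t -> f l a <= u a)%N].

Definition demand (t : sptree A) (s : L -> int) (cv : L -> nat) : lab :=
  if excluded_middle_informative (feasible t s cv) then L0 else Linf.

End SP.

(* Main.v *)
Require Import Defs.
From mathcomp Require Import all_boot all_order all_algebra.
From Stdlib Require Import ClassicalDescription.
Import GRing.Theory Num.Theory.
Set Implicit Arguments.

Section H.
Variables (V A : finType) (tail head : A -> V).

Lemma verts_P (t1 t2 : sptree A) :
  verts tail head (Pnode t1 t2) = verts tail head t1 :|: verts tail head t2.
Proof. by rewrite /verts /= !imsetU setUACA. Qed.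
Lemma verts_S (t1 t2 : sptree A) :
  verts tail head (Snode t1 t2) = verts tail head t1 :|: verts tail head t2.
Proof. by rewrite /verts /= !imsetU setUACA. Qed.

Lemma tail_in t a : a \in arcs t -> tail a \in verts tail head t.
Proof. by move=> Ha; rewrite /verts inE; apply/orP; left; apply: imset_f. Qed.
Lemma head_in t a : a \in arcs t -> head a \in verts tail head t.
Proof. by move=> Ha; rewrite /verts inE; apply/orP; right; apply: imset_f. Qed.

Lemma ot_in t : orig tail t \in verts tail head t /\ targ head t \in verts tail head t.
Proof.
elim: t => [a|t1 [I1 J1] t2 [I2 J2]|t1 [I1 J1] t2 [I2 J2]] /=.
- by split; [apply: tail_in | apply: head_in]; rewrite inE.
- by rewrite verts_S; split; apply/setUP; [left|right].
- by rewrite verts_P; split; apply/setUP; left.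
Qed.

Lemma wf_key t : sp_wf tail head t ->
  orig tail t != targ head t /\ forall a, a \in arcs t -> head a != orig tail t.
Proof.
elim: t => [a|t1 IH1 t2 IH2|t1 IH1 t2 IH2] /=.
- move=> H; split; first by apply/eqP.
  by move=> a'; rewrite inE => /eqP ->; apply/eqP; auto.
- case=> w1 w2 e d I; have [n1 h1] := IH1 w1; have [n2 h2] := IH2 w2.
  have key : forall z, z \in verts tail head t1 -> z \in verts tail head t2 -> z = targ head t1.
    by move=> z z1 z2; apply/set1P; rewrite -I inE z1 z2.
  split.
  + apply/eqP => E; move/negP: n1; apply; apply/eqP; apply: key.
      exact: (ot_in t1).1.
    by rewrite E; exact: (ot_in t2).2.
  + move=> a; rewrite inE => /orP [Ha|Ha]; first exact: h1.
    apply/eqP => E; move/negP: n1; apply; apply/eqP; apply: key.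
      exact: (ot_in t1).1.
    by rewrite -E; apply: head_in.
- case=> w1 w2 [eo et] d I; have [n1 h1] := IH1 w1; have [n2 h2] := IH2 w2.
  split => // a; rewrite inE => /orP [Ha|Ha]; first exact: h1.
  by rewrite eo; apply: h2.
Qed.

Lemma subtree_wf t r : subtree t r -> sp_wf tail head r -> sp_wf tail head t.
Proof.
elim: r => [a|r1 IH1 r2 IH2|r1 IH1 r2 IH2] /=.
- by case=> [->|[]].
- case=> [->//|[H|H]] [w1 w2 _ _ _]; [exact: IH1|exact: IH2].
- case=> [->//|[H|H]] [w1 w2 _ _ _]; [exact: IH1|exact: IH2].
Qed.

Lemma sumU (X Y : {set A}) (p : pred A) (g : A -> int) : [disjoint X & Y] ->
  (\sum_(a in X :|: Y | p a) g a = \sum_(a in X | p a) g a + \sum_(a in Y | p a) g a)%R.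
Proof.
move=> d; rewrite (big_mkcondr _ _ (fun a => a \in X :|: Y)) (big_mkcondr _ _ (fun a => a \in X)).
rewrite (big_mkcondr _ _ (fun a => a \in Y)).
rewrite (eq_bigl [predU X & Y]); first by rewrite bigU.
by move=> a; rewrite !inE.
Qed.

Lemma sumUn (X Y : {set A}) (g : A -> nat) : [disjoint X & Y] ->
  (\sum_(a in X :|: Y) g a = \sum_(a in X) g a + \sum_(a in Y) g a)%N.
Proof.
move=> d; rewrite (eq_bigl [predU X & Y]); first by rewrite bigU.
by move=> a; rewrite !inE.
Qed.
End H.

Unset Implicit Arguments.
Theorem mainTheorem10
  (V A L : finType) (tail head : A -> V) (fixed : {set A})
  (u c : A -> nat) (b : L -> V -> int)
  (HL : (0 < #|L|)%N)
  (Hb : forall l, (\sum_(w : V) b l w)%R = 0%R)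
  (r x y : sptree A)
  (Hr : sp_tree_of tail head r)
  (Hv : subtree (Pnode x y) r)
  (s : L -> int) (cv : L -> nat) :
  demand tail head fixed u c b (Pnode x y) s cv =
  lab_min (fun z => exists (sx sy : L -> int) (cx cy : L -> nat),
     [/\ (forall l, s l = (sx l + sy l)%R),
         (forall l, cv l = (cx l + cy l)%N),
         (forall l, (0 <= sx l)%R /\ (0 <= sy l)%R) &
         z = ladd (demand tail head fixed u c b x sx cx)
                  (demand tail head fixed u c b y sy cy)]).
Proof.
have wP : sp_wf tail head (Pnode x y) by apply: subtree_wf Hv _; case: Hr.
case: (wP) => wx wy [eo et] dxy Ixy.
have [nx hx] := @wf_key V A tail head x wx; have [ny hy] := @wf_key V A tail head y wy.
have sep : forall w, w \in verts tail head x -> w \in verts tail head y ->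
    w = orig tail x \/ w = targ head x.
  move=> w w1 w2; have : w \in verts tail head x :&: verts tail head y by rewrite in_setI w1 w2.
  by rewrite Ixy in_set2 => /orP[]/eqP; [left|right].
have Zh : forall t (g : A -> int), sp_wf tail head t ->
    (\sum_(a in arcs t | head a == orig tail t) g a = 0)%R.
  move=> t g w; apply: big1 => a /andP[Ha /eqP E].
  by have := (@wf_key V A tail head t w).2 a Ha; rewrite E eqxx.
have Zt : forall t w (g : A -> int), w \notin verts tail head t ->
    (\sum_(a in arcs t | tail a == w) g a = 0)%R.
  move=> t w g Hw; apply: big1 => a /andP[Ha /eqP E].
  by move/negP: Hw; case; rewrite -E; apply: tail_in.
have Zd : forall t w (g : A -> int), w \notin verts tail head t ->
    (\sum_(a in arcs t | head a == w) g a = 0)%R.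
  move=> t w g Hw; apply: big1 => a /andP[Ha /eqP E].
  by move/negP: Hw; case; rewrite -E; apply: head_in.
rewrite /lab_min /demand.
case: excluded_middle_informative => [Fp|NFp]; case: excluded_middle_informative => [Ex|NEx] //.
- exfalso; apply: NEx.
  case: Fp => f [F1 F2 F3 F4].
  pose sxf (t : sptree A) l := (\sum_(a in arcs t | tail a == orig tail t) (f l a)%:Z
     - \sum_(a in arcs t | head a == orig tail t) (f l a)%:Z)%R.
  pose cxf (t : sptree A) l := (\sum_(a in arcs t) c a * f l a)%N.
  have inP : forall w, w \in verts tail head x \/ w \in verts tail head y ->
      w \in verts tail head (Pnode x y).
    by move=> w H; rewrite verts_P; apply/setUP.
  have inA : forall a, a \in arcs x \/ a \in arcs y -> a \in arcs (Pnode x y).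
    by move=> a H; apply/setUP.
  exists (sxf x), (sxf y), (cxf x), (cxf y); split.
  + move=> l; have := F2 (orig tail x) l (inP _ (or_introl (@ot_in V A tail head x).1)) nx.
    rewrite /= eqxx !sumU // /sxf -eo => <-.
    by rewrite opprD addrACA.
  + by move=> l; rewrite -F1 /= sumUn.
  + move=> l; rewrite /sxf !Zh // !subr0; split; apply: sumr_ge0 => a _; by [].
  + have Fx : feasible tail head fixed u c b x (sxf x) (cxf x).
    { exists f; split.
    * by [].
    * move=> w l Hw Hne.
      case: (eqVneq w (orig tail x)) => [->|Hwo]; first by [].
      have Hny : w \notin verts tail head y.
        by apply/negP => Hy; case: (sep w Hw Hy) => E; [move/eqP: Hwo|move/eqP: Hne].
      have := F2 w l (inP _ (or_introl Hw)) Hne.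
      by rewrite /= (negbTE Hwo) !sumU // (Zt y) // (Zd y) // !addr0.
    * by move=> a l l' Ha; apply: F3; apply: inA; left.
    * by move=> a l Ha; apply: F4; apply: inA; left. }
    have Fy : feasible tail head fixed u c b y (sxf y) (cxf y).
    { exists f; split.
    * by [].
    * move=> w l Hw Hne.
      case: (eqVneq w (orig tail y)) => [->|Hwo]; first by [].
      have Hwo' : w != orig tail x by rewrite eo.
      have Hne' : w != targ head x by rewrite et.
      have Hnx : w \notin verts tail head x.
        by apply/negP => Hx; case: (sep w Hx Hw) => E; [move/eqP: Hwo'|move/eqP: Hne'].
      have := F2 w l (inP _ (or_intror Hw)) Hne'.
      by rewrite /= (negbTE Hwo') !sumU // (Zt x) // (Zd x) // !add0r.
    * by move=> a l l' Ha; apply: F3; apply: inA; right.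
    * by move=> a l Ha; apply: F4; apply: inA; right. }
    rewrite /demand; case: excluded_middle_informative => H1; last by case: H1.
    case: excluded_middle_informative => H2; last by case: H2.
    by [].
- exfalso; apply: NFp.
  case: Ex => sx [sy [cx [cy [E1 E2 E3]]]].
  rewrite /demand; case: excluded_middle_informative => [Fx|Fx]; case: excluded_middle_informative => [Fy|Fy] //= _.
  case: Fx => fx [X1 X2 X3 X4]; case: Fy => fy [Y1 Y2 Y3 Y4].
  exists (fun l a => if a \in arcs x then fx l a else fy l a); split.
  + move=> l /=; rewrite sumUn // E2 -X1 -Y1; congr addn; apply: eq_bigr => a Ha.
      by rewrite Ha.
    by rewrite (disjointFl dxy Ha).
  + move=> w l Hw Hne /=.
    have ex : forall p : pred A, (\sum_(a in arcs x | p a)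
        (if a \in arcs x then fx l a else fy l a)%:Z = \sum_(a in arcs x | p a) (fx l a)%:Z)%R.
      by move=> p; apply: eq_bigr => a /andP[Ha _]; rewrite Ha.
    have ey : forall p : pred A, (\sum_(a in arcs y | p a)
        (if a \in arcs x then fx l a else fy l a)%:Z = \sum_(a in arcs y | p a) (fy l a)%:Z)%R.
      by move=> p; apply: eq_bigr => a /andP[Ha _]; rewrite (disjointFl dxy Ha).
    rewrite !sumU // (ex (fun a => tail a == w)) (ex (fun a => head a == w)).
    rewrite (ey (fun a => tail a == w)) (ey (fun a => head a == w)).
    case: (eqVneq w (orig tail x)) => [->|Hwo].
    * have kx := X2 _ l (@ot_in V A tail head x).1 nx; rewrite eqxx in kx.
      have ky := Y2 _ l (@ot_in V A tail head y).1 ny; rewrite eqxx -eo in ky.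
      by rewrite E1 -kx -ky opprD addrACA.
    * move: Hw; rewrite verts_P => /setUP [Hx|Hy].
      - have Hny : w \notin verts tail head y.
          by apply/negP => Hy; case: (sep w Hx Hy) => E; [move/eqP: Hwo|move/eqP: Hne].
        by rewrite (Zt y) // (Zd y) // !addr0 X2 // ?(negbTE Hwo).
      - have Hnx : w \notin verts tail head x.
          by apply/negP => Hx; case: (sep w Hx Hy) => E; [move/eqP: Hwo|move/eqP: Hne].
        have Hwo' : w != orig tail y by rewrite -eo.
        have Hne' : w != targ head y by rewrite -et.
        by rewrite (Zt x) // (Zd x) // !add0r Y2 // ?(negbTE Hwo) ?(negbTE Hwo').
  + move=> a l l' /setUP [Ha|Ha] Hf.
      by rewrite Ha; apply: X3.
    by rewrite (disjointFl dxy Ha); apply: Y3.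
  + move=> a l /setUP [Ha|Ha].
      by rewrite Ha; apply: X4.
    by rewrite (disjointFl dxy Ha); apply: Y4.
Qed.
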